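(* Let $d\ge 1$ and $h\ge 1$ be integers and let $T$ be the complete $d$-ary tree of height $h$. For every integer $0\le l\le h$ and every vertex $x$ at distance $l$ from the root, the hitting time from $x$ to the root is $f_h(d)-f_{h-l}(d)$.
   Context: The complete $d$-ary tree of height $h$ is the rooted tree in which every vertex at depth less than $h$ has exactly $d$ children and every vertex at depth $h$ is a leaf. For nonnegative integers $n$, define the polynomial $f_0(d)=0$ and, for $n\ge 1$, $f_n(d)=\left(\sum_{i=0}^{n-1}(2n-2i)d^i\right)-n$. A simple random walk moves at each step to a uniformly random neighbor; the hitting time from $x$ to $y$ is the expected number of steps for a simple random walk started at $x$ to first reach $y$. *)

(* Defs.v *)
From HB Require Import structures.
From mathcomp Require Import all_boot all_order all_algebra.
From mathcomp Require Import all_classical all_reals all_analysis.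
Set Implicit Arguments. Unset Strict Implicit. Unset Printing Implicit Defensive.
Import Order.TTheory GRing.Theory Num.Theory.
Local Open Scope ring_scope.

(* Complete d-ary tree of height h: vertices are words w : seq 'I_d with
   size w <= h; the root is [::]; the children of w (when size w < h) are
   rcons w i for i : 'I_d; the parent of a nonempty word is obtained by
   dropping its last letter.  The distance of w to the root is size w. *)
Definition tree_root (d : nat) : seq 'I_d := [::].

(* list of neighbours of the vertex w in the tree (without repetitions) *)
Definition tree_nbrs (d h : nat) (w : seq 'I_d) : seq (seq 'I_d) :=
  (if w is [::] then [::] else [:: take (size w).-1 w]) ++
  (if (size w < h)%N then [seq rcons w i | i <- enum 'I_d] else [::]).

Definition tree_deg (d h : nat) (w : seq 'I_d) : nat := size (tree_nbrs h w).

Fixpoint tree_walks (d h : nat) (x : seq 'I_d) (t : nat) : seq (seq (seq 'I_d)) :=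
  match t with
  | 0 => [:: [:: x]]
  | t'.+1 => flatten [seq [seq x :: p | p <- tree_walks h y t'] | y <- tree_nbrs h x]
  end.

Fixpoint walk_prob (R : realType) (d h : nat) (p : seq (seq 'I_d)) : R :=
  match p with
  | [::] => 1
  | [:: _] => 1
  | v :: p' => (tree_deg h v)%:R^-1 * walk_prob R h p'
  end.

(* P_x(tau_root > t): probability that the walk started at x has not
   visited the root at times 0,...,t *)
Definition surv_prob (R : realType) (d h : nat) (x : seq 'I_d) (t : nat) : R :=
  \sum_(p <- tree_walks h x t | all (fun v => v != tree_root d) p) walk_prob R h p.

(* hitting time of the root from x: E_x[tau_root] = sum_{t>=0} P_x(tau_root > t),
   as an extended real (+oo if the series diverges) *)
Definition hitting_time_root (R : realType) (d h : nat) (x : seq 'I_d) : \bar R :=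
  (\sum_(0 <= t <oo) (surv_prob R h x t)%:E)%E.

Definition fpoly (R : realType) (n : nat) (d : R) : R :=
  if n is 0 then 0
  else \sum_(i < n) ((2 * n - 2 * i)%N)%:R * d ^+ i - n%:R.

(* Main.v *)
Require Import Defs.
From HB Require Import structures.
From mathcomp Require Import all_boot all_order all_algebra.
From mathcomp Require Import all_classical all_reals all_analysis.
From mathcomp Require Import zify ring lra.
Import Order.TTheory GRing.Theory Num.Theory numFieldNormedType.Exports.
Local Open Scope classical_set_scope.
Local Open Scope ring_scope.
Set Implicit Arguments. Unset Strict Implicit.

Section Comb.
Variables (R : realType) (d h : nat).
Local Notation V := (seq 'I_d).

Definition ind (x : V) : R := (x != [::])%:R.
Definition P (F : V -> R) (x : V) : R :=
  \sum_(y <- tree_nbrs h x) (tree_deg h x)%:R^-1 * F y.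

Fixpoint sp (t : nat) (x : V) : R :=
  if t is t'.+1 then ind x * P (sp t') x else ind x.

Lemma walks_ne (y : V) t : all (fun p => p != [::]) (tree_walks h y t).
Proof.
case: t => [|t] //=; apply/allP => p /flattenP [s /mapP [z _ ->]] /mapP [q _ ->] //.
Qed.

Lemma surv_sp t (x : V) : surv_prob R h x t = sp t x.
Proof.
rewrite /surv_prob; elim: t x => [|t IH] x /=.
  rewrite big_cons big_nil /ind /tree_root /=.
  by case: (x != [::]); rewrite /= ?addr0.
rewrite big_mkcond big_allpairs_dep /= /P /ind /tree_root.
have [->|xn] := eqVneq x [::]; rewrite /=.
  by rewrite mul0r; apply: big1 => y _; apply: big1 => p _.
rewrite mul1r; apply: eq_bigr => y _; rewrite -IH mulr_sumr [in RHS]big_mkcond.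
rewrite big_seq [RHS]big_seq; apply: eq_bigr => p pin.
have := allP (walks_ne y t) p pin; case: p {pin} => // v p _ /=.
Qed.
End Comb.

Section Poly.
Variable R : realType.

Lemma fpolyE n (x : R) : fpoly n x = \sum_(i < n) ((2 * n - 2 * i)%N)%:R * x ^+ i - n%:R.
Proof. by case: n => [|n] //=; rewrite big_ord0 subr0. Qed.

Lemma fpolyS n (x : R) : fpoly n.+1 x = fpoly n x + (2 * \sum_(i < n.+1) x ^+ i - 1).
Proof.
rewrite !fpolyE.
have -> : \sum_(i < n.+1) ((2 * n.+1 - 2 * i)%N)%:R * x ^+ i =
   \sum_(i < n.+1) ((2 * n - 2 * i)%N)%:R * x ^+ i + 2 * \sum_(i < n.+1) x ^+ i.
  rewrite mulr_sumr -big_split /=; apply: eq_bigr => i _.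
  have hi := ltn_ord i.
  have -> : (2 * n.+1 - 2 * i = (2 * n - 2 * i) + 2)%N by lia.
  by rewrite natrD mulrDl.
rewrite big_ord_recr /= subnn mul0r addr0 -natr1; ring.
Qed.

Lemma sum_ge1 (x : R) n : 1 <= x -> 1 <= \sum_(i < n.+1) x ^+ i.
Proof.
move=> x1; rewrite big_ord_recl expr0 lerDl; apply: sumr_ge0 => i _.
by apply: exprn_ge0; apply: le_trans x1.
Qed.

Lemma fpoly_mono (x : R) m n : 1 <= x -> (m <= n)%N -> fpoly m x <= fpoly n x.
Proof.
move=> x1; elim: n => [|n IH]; first by rewrite leqn0 => /eqP ->.
rewrite leq_eqVlt => /orP [/eqP ->//|]; rewrite ltnS => /IH H.
apply: (le_trans H); rewrite fpolyS lerDl subr_ge0.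
have := sum_ge1 n x1; lra.
Qed.

Lemma fpoly_ge0 (x : R) n : 1 <= x -> 0 <= fpoly n x.
Proof. by move=> x1; have := fpoly_mono x1 (leq0n n). Qed.
End Poly.

Section Main.
Variables (R : realType) (d h : nat).
Hypotheses (hd : (1 <= d)%N) (hh : (1 <= h)%N).
Local Notation V := (seq 'I_d).
Local Notation D := (d%:R : R).
Local Notation P := (@P R d h).

Definition g (x : V) : R := fpoly h D - fpoly (h - size x) D.

Lemma D1 : 1 <= D.
Proof. by rewrite ler1n. Qed.

Lemma nbrs_size (x y : V) : (size x <= h)%N -> y \in tree_nbrs h x -> (size y <= h)%N.
Proof.
move=> xh; rewrite mem_cat => /orP [].
  case: x xh => //= a x xh; rewrite inE => /eqP ->; rewrite size_take /=; case: ifP; lia.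
case: ifP => // xlt /mapP [i _ ->]; rewrite size_rcons; lia.
Qed.

Lemma P_ext (F G : V -> R) x : (forall y, y \in tree_nbrs h x -> F y = G y) -> P F x = P G x.
Proof. by move=> e; apply: eq_big_seq => y /e ->. Qed.

Lemma geomS (y : R) n : \sum_(i < n.+1) y ^+ i = 1 + y * \sum_(i < n) y ^+ i.
Proof.
rewrite big_ord_recl expr0 mulr_sumr; congr (_ + _).
by apply: eq_bigr => i _; rewrite -exprS.
Qed.

Lemma g_harm (x : V) : (0 < size x <= h)%N -> g x = 1 + P g x.
Proof.
case: x => [|a x] //= xh.
rewrite /P /tree_deg /tree_nbrs /= big_cons /=.
rewrite /g /= size_take /= ltnSn.
case: ifP => xlt.
  rewrite big_map size_map size_enum_ord.
  rewrite (eq_bigr (fun _ => (d.+1)%:R^-1 * (fpoly h D - fpoly (h - (size x).+2) D))); last first.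
    by move=> i _; rewrite /= size_rcons.
  rewrite big_const_seq count_predT size_enum_ord.
  have [k hk] : exists k, (h - (size x).+1 = k.+1)%N by exists (h - (size x).+2)%N; lia.
  have -> : (h - (size x).+2 = k)%N by lia.
  have -> : (h - size x = k.+2)%N by lia.
  rewrite hk !fpolyS.
  rewrite (geomS _ k.+1) iter_addr_0 -mulr_natr -natr1.
  set S := \sum_(_ < _) _.
  have hD : D + 1 != 0 by rewrite natr1 pnatr_eq0.
  by field; rewrite addrC.
have xge : (h <= (size x).+1)%N by rewrite leqNgt xlt.
have -> : (size x).+1 = h by lia.
rewrite big_nil addr0 subnn.
have -> : (h - size x = 1)%N by lia.
by rewrite fpolyS big_ord1 expr0 /= invr1 mul1r; ring.
Qed.

Lemma g_root : g [::] = 0.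
Proof. by rewrite /g subn0 subrr. Qed.

Lemma g_bounds (x : V) : (size x <= h)%N -> 0 <= g x <= fpoly h D.
Proof.
move=> xh; rewrite /g subr_ge0 fpoly_mono ?leq_subr ?D1 //=.
by rewrite lerBlDr lerDl fpoly_ge0 // D1.
Qed.
End Main.

Section Rec.
Variables (R : realType) (d h : nat).
Hypotheses (hd : (1 <= d)%N) (hh : (1 <= h)%N).
Local Notation V := (seq 'I_d).
Local Notation D := (d%:R : R).
Local Notation P := (@P R d h).
Local Notation ind := (@ind R d).
Local Notation g := (@g R d h).
Local Notation sp := (@sp R d h).

Fixpoint Srec t (x : V) : R := if t is t'.+1 then ind x * (1 + P (Srec t') x) else 0.
Fixpoint Rrec t (x : V) : R := if t is t'.+1 then ind x * P (Rrec t') x else ind x * g x.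

Lemma PD (F G : V -> R) x : P (fun y => F y + G y) x = P F x + P G x.
Proof. by rewrite /P -big_split; apply: eq_bigr => y _; rewrite mulrDr. Qed.

Lemma PZ (F : V -> R) c x : P (fun y => c * F y) x = c * P F x.
Proof. by rewrite /P mulr_sumr; apply: eq_bigr => y _; rewrite mulrCA. Qed.

Lemma P_le (F G : V -> R) x : (forall y, y \in tree_nbrs h x -> F y <= G y) -> P F x <= P G x.
Proof.
move=> H; rewrite /P big_seq [leRHS]big_seq; apply: ler_sum => y /H le.
by rewrite ler_wpM2l // invr_ge0.
Qed.

Lemma ind_ge0 (x : V) : 0 <= ind x.
Proof. by rewrite /ind ler0n. Qed.

Lemma SR t (x : V) : (size x <= h)%N -> Srec t x + Rrec t x = g x.
Proof.
elim: t x => [|t IH] x xh /=.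
  rewrite add0r /ind; case: eqP => [->|_]; first by rewrite g_root mul0r.
  by rewrite mul1r.
rewrite -mulrDr -addrA -PD (P_ext (G := g)); last first.
  by move=> y yin; apply: IH; exact: nbrs_size yin.
rewrite /ind; case: eqP => [->|xn]; first by rewrite g_root mul0r.
rewrite mul1r -g_harm //; apply/andP; split => //.
by case: x xn {xh} => //.
Qed.

Lemma SrecS t (x : V) : Srec t.+1 x = Srec t x + sp t x.
Proof.
elim: t x => [|t IH] x /=; first by rewrite /P big1 ?addr0 ?mulr1 ?add0r // => y _; rewrite mulr0.
rewrite (P_ext (G := fun y => Srec t y + sp t y)); last by move=> y _; exact: IH.
by rewrite PD addrA mulrDr.
Qed.

Lemma Ssum t (x : V) : \sum_(i < t) sp i x = Srec t x.
Proof. by elim: t => [|t IH]; rewrite ?big_ord0 // SrecS big_ord_recr /= IH. Qed.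

Lemma sp_ge0 t (x : V) : 0 <= sp t x.
Proof.
elim: t x => [|t IH] x /=; first exact: ind_ge0.
rewrite mulr_ge0 ?ind_ge0 //; rewrite /P sumr_ge0 // => y _.
by rewrite mulr_ge0 ?invr_ge0.
Qed.

Lemma Rrec_bounds t (x : V) : (size x <= h)%N ->
  0 <= Rrec t x <= fpoly h D * sp t x.
Proof.
elim: t x => [|t IH] x xh /=.
  have /andP [g0 gM] := g_bounds R hd xh.
  by rewrite mulr_ge0 ?ind_ge0 //= mulrC ler_wpM2r ?ind_ge0.
apply/andP; split.
  rewrite mulr_ge0 ?ind_ge0 //; rewrite /P big_seq sumr_ge0 // => y yin.
  rewrite mulr_ge0 ?invr_ge0 //.
  by have /andP [] := IH y (nbrs_size hd hh xh yin).
rewrite [in leRHS]mulrCA -[fpoly h D * P _ _]PZ ler_wpM2l ?ind_ge0 //; apply: P_le => y yin.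
by have /andP [] := IH y (nbrs_size hd hh xh yin).
Qed.
End Rec.

Theorem mainTheorem7 (R : realType) (d h l : nat) (x : seq 'I_d) :
  (1 <= d)%N -> (1 <= h)%N -> (l <= h)%N -> size x = l ->
  hitting_time_root R h x = (fpoly h (d%:R : R) - fpoly (h - l) (d%:R : R))%:E.
Proof.
move=> hd hh hl sx.
have xh : (size x <= h)%N by rewrite sx.
pose s := fun t => @sp R d h t x.
have Sn : forall n, series s n = g R h x - Rrec R h n x.
  move=> n; rewrite /series /= big_mkord Ssum.
  by rewrite -(SR R hd hh n xh) addrK.
have cs : cvgn (series s).
  apply: nondecreasing_is_cvgn.
    by apply: nondecreasing_series => n _ _; exact: sp_ge0.
  exists (g R h x) => _ [n _ <-]; rewrite Sn lerBlDr lerDl.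
  by have /andP [] := Rrec_bounds R hd hh n xh.
have s0 : s @ \oo --> 0 := cvg_series_cvg_0 cs.
have R0 : (fun n => Rrec R h n x) @ \oo --> 0.
  apply: (@squeeze_cvgr _ _ _ _ (fun _ => 0) (fun n => fpoly h (d%:R : R) * s n)).
  - by apply: nearW => n; exact: Rrec_bounds.
  - exact: cvg_cst.
  - by rewrite -(mulr0 (fpoly h (d%:R : R))); apply: cvgMl_tmp.
have Sg : series s @ \oo --> g R h x.
  rewrite (funext Sn) -[X in _ --> X]subr0; apply: cvgB => //; exact: cvg_cst.
rewrite /hitting_time_root.
have -> : (fun n => (\sum_(0 <= t < n) (surv_prob R h x t)%:E)%E) = EFin \o series s.
  apply: funext => n /=; rewrite sumEFin /series /=; congr (_%:E).
  by apply: eq_bigr => t _; rewrite surv_sp.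
by rewrite EFin_lim // (cvg_lim _ Sg) // /g sx.
Qed.
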